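(* Let $q\ge 4$ be a prime power and $\rho(q)=\min\{\rho_q(u,v): u,v\in\mathcal{D}_q\}$. Then $\rho(q)=0$ if $3$ divides $q-1$, and $\rho(q)=2$ otherwise.
   Context: $\mathbb{F}_q$ is the finite field with $q$ elements. Hamming distance $d(u,v)=|\{i:u_i\ne v_i\}|$ on $\mathbb{F}_q^3$; $B(u)=\{v: d(u,v)\le 1\}$; $E(u)=\bigcup_{\lambda\in\mathbb{F}_q}B(\lambda u)$. $\mathcal{D}_q=\{(u_1,u_2,u_3)\in\mathbb{F}_q^3: u_1,u_2,u_3 \text{ pairwise distinct and nonzero}\}$, $\widetilde{B}(u)=B(u)\cap\mathcal{D}_q$, $\widetilde{E}(u)=E(u)\cap\mathcal{D}_q$. For $u,v\in\mathbb{F}_q^3$, $\rho_q(u,v)=0$ if $|\widetilde{E}(u)|=0$ or $|\widetilde{E}(v)|=0$, and otherwise $\rho_q(u,v)=\sum_{\mu\in\mathbb{F}_q^*}|\widetilde{B}(u)\cap\widetilde{B}(\mu v)|$. *)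

(* Defs.v *)
From HB Require Import structures.
From mathcomp Require Import all_boot all_order all_algebra all_field.
Set Implicit Arguments. Unset Strict Implicit. Unset Printing Implicit Defensive.
Import GRing.Theory.
Local Open Scope ring_scope.

Section Defs.
Variable F : finFieldType.
Definition vec3 := {ffun 'I_3 -> F}.

Definition vscale (lam : F) (u : vec3) : vec3 := [ffun i => lam * u i].

Definition hdist (u v : vec3) : nat := #|[set i : 'I_3 | u i != v i]|.

Definition ball1 (u : vec3) : {set vec3} := [set v | (hdist u v <= 1)%N].

Definition Eset (u : vec3) : {set vec3} := \bigcup_(lam : F) ball1 (vscale lam u).

Definition Dset : {set vec3} :=
  [set u : vec3 | [forall i, u i != 0] &&
                  [forall i, forall j, (i != j) ==> (u i != u j)]].

Definition Bt (u : vec3) : {set vec3} := ball1 u :&: Dset.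
Definition Et (u : vec3) : {set vec3} := Eset u :&: Dset.

Definition rho_q (u v : vec3) : nat :=
  if (#|Et u| == 0)%N || (#|Et v| == 0)%N then 0%N
  else (\sum_(mu : F | mu != 0%R) #|Bt u :&: Bt (vscale mu v)|)%N.
End Defs.

(* Main.v *)
Require Import Defs.
From HB Require Import structures.
From mathcomp Require Import all_boot all_order all_algebra all_field all_fingroup all_solvable.
From mathcomp Require Import ring.
Set Implicit Arguments. Unset Strict Implicit. Unset Printing Implicit Defensive.
Import GRing.Theory FinRing.Theory.


Section Aux.
Local Open Scope ring_scope.
Variable F : finFieldType.
Implicit Types x y z a b c t mu : F.

Definition mk3 x y z : vec3 F :=
  [ffun i : 'I_3 => match val i with 0 => x | 1 => y | _ => z end].
Definition i0 : 'I_3 := @Ordinal 3 0 isT.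
Definition i1 : 'I_3 := @Ordinal 3 1 isT.
Definition i2 : 'I_3 := @Ordinal 3 2 isT.

Lemma mk3E (u : vec3 F) : u = mk3 (u i0) (u i1) (u i2).
Proof.
apply/ffunP => -[[|[|[|m]]] Hm] //; rewrite ffunE /=; congr (u _); exact: val_inj.
Qed.

Lemma inD3 x y z : (mk3 x y z \in Dset F) =
  [&& x != 0, y != 0, z != 0, x != y, x != z & y != z].
Proof.
rewrite inE; apply/idP/idP.
- case/andP => /forallP h1 /forallP h2.
  have h2' i j : i != j -> mk3 x y z i != mk3 x y z j.
    by move=> hij; exact: (implyP (forallP (h2 i) j) hij).
  move: (h1 i0) (h1 i1) (h1 i2) (h2' i0 i1 isT) (h2' i0 i2 isT) (h2' i1 i2 isT).
  by rewrite !ffunE /= => -> -> -> -> -> ->.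
- case/and5P => hx hy hz hxy /andP[hxz hyz]; apply/andP; split.
    by apply/forallP => -[[|[|[|m]]] Hm] //; rewrite ffunE.
  apply/forallP => -[[|[|[|m]]] Hm] //; apply/forallP => -[[|[|[|n]]] Hn] //;
  apply/implyP => //= _; rewrite !ffunE //= eq_sym //.
Qed.

Lemma vscale3 mu x y z : vscale mu (mk3 x y z) = mk3 (mu * x) (mu * y) (mu * z).
Proof. by apply/ffunP => -[[|[|[|m]]] Hm] //; rewrite !ffunE. Qed.

Lemma hd_agree (u w : vec3 F) (k : 'I_3) :
  (forall l : 'I_3, val l != val k -> u l = w l) -> (hdist u w <= 1)%N.
Proof.
move=> H; rewrite /hdist.
apply: leq_trans (subset_leq_card (_ : _ \subset [set k])) _; last by rewrite cards1.
apply/subsetP => l; rewrite !inE; apply: contraR => hl.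
by rewrite H // (contra _ hl) // => /eqP e; apply/eqP/val_inj.
Qed.

Lemma hd01 x y z x' y' z' : x = x' -> y = y' -> (hdist (mk3 x y z) (mk3 x' y' z') <= 1)%N.
Proof. by move=> -> ->; apply: (hd_agree (k := i2)) => -[[|[|[|m]]] Hm] //; rewrite !ffunE. Qed.
Lemma hd02 x y z x' y' z' : x = x' -> z = z' -> (hdist (mk3 x y z) (mk3 x' y' z') <= 1)%N.
Proof. by move=> -> ->; apply: (hd_agree (k := i1)) => -[[|[|[|m]]] Hm] //; rewrite !ffunE. Qed.
Lemma hd12 x y z x' y' z' : y = y' -> z = z' -> (hdist (mk3 x y z) (mk3 x' y' z') <= 1)%N.
Proof. by move=> -> ->; apply: (hd_agree (k := i0)) => -[[|[|[|m]]] Hm] //; rewrite !ffunE. Qed.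

End Aux.


Section Aux2.
Local Open Scope ring_scope.
Variable F : finFieldType.
Implicit Types x y z a b c t mu : F.

Lemma in_Et (u : vec3 F) : u \in Dset F -> u \in Et u.
Proof.
move=> hu; rewrite inE hu andbT; apply/bigcupP; exists 1 => //.
rewrite inE; apply: (hd_agree (k := i0)) => l _; by rewrite ffunE mul1r.
Qed.

Lemma rhoE (u v : vec3 F) : u \in Dset F -> v \in Dset F ->
  rho_q u v = \sum_(mu : F | mu != 0%R) #|Bt u :&: Bt (vscale mu v)|.
Proof.
move=> hu hv; rewrite /rho_q.
have nz w : w \in Dset F -> (#|Et w| == 0)%N = false.
  by move=> hw; apply/negbTE; rewrite -lt0n; apply/card_gt0P; exists w; exact: in_Et.
by rewrite !nz.
Qed.

Lemma sum_ge2 (X : F -> {set vec3 F}) mu1 mu2 w1 w2 :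
  mu1 != 0 -> mu2 != 0 -> w1 \in X mu1 -> w2 \in X mu2 ->
  (mu1 != mu2) || (w1 != w2) ->
  (2 <= \sum_(mu : F | mu != 0%R) #|X mu|)%N.
Proof.
move=> h1 h2 hw1 hw2; case: (eqVneq mu1 mu2) => [e|ne] /= hw; first subst mu2.
  rewrite (bigD1 mu1) //=; apply: leq_trans (leq_addr _ _).
  apply: (@leq_trans #|[set w1; w2]|); first by rewrite cards2 hw.
  by apply: subset_leq_card; apply/subsetP => w; rewrite !inE => /orP[]/eqP->.
rewrite (bigD1 mu1) //= (bigD1 mu2) /=; last by rewrite h2 eq_sym.
rewrite addnA; apply: leq_trans (leq_addr _ _).
have g1 : (0 < #|X mu1|)%N by rewrite card_gt0; apply/set0Pn; exists w1.
have g2 : (0 < #|X mu2|)%N by rewrite card_gt0; apply/set0Pn; exists w2.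
by apply: (@leq_add 1 1).
Qed.

End Aux2.


Lemma omega_ex (F : finFieldType) : (3 %| #|F|.-1)%N ->
  exists w : F, (w ^+ 3 = 1 /\ w != 1)%R.
Proof.
move=> h3; rewrite -card_finField_unit in h3.
have [x _ ox] := Cauchy (isT : prime 3) h3.
exists (val x); split.
  by rewrite -val_unitX -ox expg_order val_unit1.
apply/negP => /eqP e.
have x1 : x = 1%g by apply: val_inj; rewrite e val_unit1.
by move: ox; rewrite x1 order1.
Qed.

Section Ex.
Local Open Scope ring_scope.
Variable F : finFieldType.
Implicit Types x y z a b c t mu : F.

Lemma hd_inv (u w : vec3 F) : (hdist u w <= 1)%N ->
  exists k : 'I_3, forall l, val l != val k -> u l = w l.
Proof.
rewrite /hdist => /card_le1_eqP h.
case: (pickP [pred i | u i != w i]) => [k /= hk|none].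
  exists k => l hl; apply/eqP; apply: contraR hl => hl.
  by rewrite (h l k) ?inE //.
by exists i0 => l _; apply/eqP; move: (none l) => /= /negbFE.
Qed.

Lemma hd3_inv x y z x' y' z' : (hdist (mk3 x y z) (mk3 x' y' z') <= 1)%N ->
  [\/ x = x' /\ y = y', x = x' /\ z = z' | y = y' /\ z = z'].
Proof.
move/hd_inv => [[[|[|[|m]]] Hm] H] //.
- by apply: Or33; split; [move: (H i1 isT)|move: (H i2 isT)]; rewrite !ffunE.
- by apply: Or32; split; [move: (H i0 isT)|move: (H i2 isT)]; rewrite !ffunE.
- by apply: Or31; split; [move: (H i0 isT)|move: (H i1 isT)]; rewrite !ffunE.
Qed.

Lemma inBt (u w : vec3 F) : (w \in Bt u) = (hdist u w <= 1)%N && (w \in Dset F).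
Proof. by rewrite /Bt !inE. Qed.

Lemma example w : w ^+ 3 = 1 -> w != 1 ->
  \sum_(mu : F | mu != 0%R) #|Bt (mk3 1 (w ^+ 2) w) :&: Bt (vscale mu (mk3 1 w (w ^+ 2)))| = 0%N.
Proof.
move=> w3 w1.
have w0 : w != 0 by apply: contraNneq w1 => e; move: w3; rewrite e expr0n /= => /eqP; rewrite eq_sym oner_eq0.
have ww2 : w != w ^+ 2.
  by apply: contraNneq w1 => e; apply/eqP; apply: (mulIf w0); rewrite mul1r -expr2 -e.
have w21 : w ^+ 2 != 1.
  by apply: contraNneq w1 => e; apply/eqP; rewrite -w3 exprS e mulr1.
have f1 m : m * w = w ^+ 2 -> m = w by move=> e; apply: (mulIf w0); rewrite e expr2.
have f2 m : m * w ^+ 2 = w -> m = w ^+ 2.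
  by move=> e; rewrite -[m]mulr1 -w3 (exprS w 2) mulrCA e -expr2.
apply: big1 => m _; apply/eqP; rewrite cards_eq0; apply/eqP/setP => p.
rewrite inE [p \in set0]inE; apply/negbTE; apply/negP.
rewrite (mk3E p) vscale3 !inBt inD3 !mulr1.
move: (p i0) (p i1) (p i2) => p0 p1 p2 /andP[/andP[hA]] hD /andP[hB _].
move: hD => /and5P[_ _ _ /eqP n01 /andP[/eqP n02 /eqP n12]].
case/hd3_inv: hA => -[A1 A2]; case/hd3_inv: hB => -[B1 B2]; subst.
- by move: B2; rewrite mul1r => /eqP; rewrite (negbTE ww2).
- by apply: n12; rewrite mul1r.
- by apply: n02; rewrite (f1 _ B1) -exprS w3.
- by apply: n12; rewrite mul1r.
- by move: B2; rewrite mul1r => /eqP; rewrite eq_sym (negbTE ww2).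
- by apply: n01; rewrite (f2 _ B2) -exprSr w3.
- by apply: n02; exact: f1 _ B2.
- by apply: n01; exact: f2 _ B2.
- by move: B2; rewrite (f1 _ B1) -exprS w3 => e; move: w1; rewrite -e eqxx.
Qed.
End Ex.


Section Low.
Local Open Scope ring_scope.
Variable F : finFieldType.
Implicit Types x y z a b c t mu p q s : F.

Lemma fconv p q t s : p != 0 -> (q * (t / p) == s) = (s * p == t * q).
Proof.
move=> hp; rewrite -(inj_eq (mulIf hp)) -mulrA divfK // eq_sym [t * q]mulrC.
by [].
Qed.

Lemma nes t p q : t != 0 -> p != 0 -> p != q -> t != q * (t / p).
Proof.
move=> ht hp hpq; apply/negP => /eqP e.
have : t * p == t * q.
  by rewrite {1}e -mulrA divfK // mulrC.
by rewrite (inj_eq (mulfI ht)) (negbTE hpq).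
Qed.

Lemma nz3 t p q : t != 0 -> p != 0 -> q != 0 -> q * (t / p) != 0.
Proof. by move=> ht hp hq; rewrite mulf_neq0 // mulf_neq0 // invr_eq0. Qed.

Lemma memX (u v w : vec3 F) mu : mu != 0 -> w \in Dset F -> (hdist u w <= 1)%N ->
  (hdist (vscale mu v) w <= 1)%N -> w \in Bt u :&: Bt (vscale mu v).
Proof. by move=> h0 hD h1 h2; rewrite in_setI !inBt h1 h2 hD. Qed.

Lemma omega3 (w : F) : w ^+ 3 = 1 -> w != 1 -> (3 %| #|F|.-1)%N.
Proof.
move=> w3 w1.
have w0 : w != 0 by apply/eqP => e; move: w3; rewrite e expr0n => /eqP; rewrite eq_sym oner_eq0.
have hn : w ^+ (#|F|.-1) = 1.
  apply: (mulfI w0); rewrite -exprS prednK ?expf_card ?mulr1 //.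
  by apply/card_gt0P; exists 0.
rewrite /dvdn; move: hn; rewrite {1}(divn_eq (#|F|.-1) 3) exprD mulnC exprM w3 expr1n mul1r.
have := ltn_mod (#|F|.-1) 3.
case: (_ %% 3)%N => [|[|[|//]]] _ //.
  by rewrite expr1 => e; move: w1; rewrite e eqxx.
move=> e; have ew : w = 1 by rewrite -[LHS]mulr1 -{1}e -exprS w3.
by move: w1; rewrite ew eqxx.
Qed.
End Low.


Section Low2.
Local Open Scope ring_scope.
Variable F : finFieldType.
Implicit Types x y z a b c t mu p q s : F.

Lemma omega_from x y z a b c : x != 0 -> y != 0 -> z != 0 -> y != x -> a != 0 ->
  y * a = x * c -> z * a = x * b -> z * b = y * a -> y * c = z * a ->
  (3 %| #|F|.-1)%N.
Proof.
move=> hx hy hz hyx ha S1 S2 S4 S6.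
have y2 : y * y = x * z.
  by apply: (mulIf ha); rewrite -mulrA S1 mulrCA S6 mulrA.
have z2 : z * z = x * y.
  by apply: (mulIf ha); rewrite -mulrA S2 mulrCA S4 mulrA.
have hyz : y * z != 0 by rewrite mulf_neq0.
have yz : y * z = x * x.
  have e1 : (y*z)*(y*z) = (y*y)*(z*z) by ring.
  have e2 : (x*z)*(x*y) = (x*x)*(y*z) by ring.
  by apply: (mulIf hyz); rewrite e1 y2 z2 e2.
have y3 : y ^+ 3 = x ^+ 3.
  have e1 : y ^+ 3 = (y * y) * y by ring.
  have e2 : x * z * y = x * (y * z) by ring.
  by rewrite e1 y2 e2 yz; ring.
apply: (@omega3 F (y / x)).
  by rewrite expr_div_n y3 divff // expf_neq0.
by rewrite -(inj_eq (mulIf hx)) divfK // mul1r.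
Qed.

End Low2.


Section Perms.
Local Open Scope ring_scope.
Variable F : finFieldType.
Implicit Types x y z a b c t mu p q s : F.

Definition XX (u v : vec3 F) mu := Bt u :&: Bt (vscale mu v).

Ltac seq_ := first [by rewrite divfK | by rewrite mulrC | by []].
Ltac hdt := first [ by apply: hd01; seq_; seq_ | by apply: hd02; seq_; seq_
                  | by apply: hd12; seq_; seq_ ].
Ltac dne := first [ done | by rewrite eq_sym | exact: nz3
                  | by apply: nes => //; rewrite eq_sym
                  | by rewrite eq_sym; apply: nes => //; rewrite eq_sym ].
Ltac solveP hu hv :=
  move: (hu) (hv); rewrite !inD3 =>
    /and5P[hx hy hz hxy /andP[hxz hyz]] /and5P[ha hb hc hab /andP[hac hbc]];
  apply: memX; [ by rewrite mulf_neq0 ?invr_eq0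
               | rewrite inD3; repeat (apply/andP; split); dne
               | hdt | rewrite vscale3; hdt ].

Lemma P1 x y z a b c : mk3 x y z \in Dset F -> mk3 a b c \in Dset F ->
  c * (x / a) != y -> mk3 x y (c * (x / a)) \in XX (mk3 x y z) (mk3 a b c) (x / a).
Proof. move=> hu hv hval; solveP hu hv. Qed.
Lemma P2 x y z a b c : mk3 x y z \in Dset F -> mk3 a b c \in Dset F ->
  b * (x / a) != z -> mk3 x (b * (x / a)) z \in XX (mk3 x y z) (mk3 a b c) (x / a).
Proof. move=> hu hv hval; solveP hu hv. Qed.
Lemma P3 x y z a b c : mk3 x y z \in Dset F -> mk3 a b c \in Dset F ->
  c * (y / b) != x -> mk3 x y (c * (y / b)) \in XX (mk3 x y z) (mk3 a b c) (y / b).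
Proof. move=> hu hv hval; solveP hu hv. Qed.
Lemma P4 x y z a b c : mk3 x y z \in Dset F -> mk3 a b c \in Dset F ->
  a * (y / b) != z -> mk3 (a * (y / b)) y z \in XX (mk3 x y z) (mk3 a b c) (y / b).
Proof. move=> hu hv hval; solveP hu hv. Qed.
Lemma P5 x y z a b c : mk3 x y z \in Dset F -> mk3 a b c \in Dset F ->
  b * (z / c) != x -> mk3 x (b * (z / c)) z \in XX (mk3 x y z) (mk3 a b c) (z / c).
Proof. move=> hu hv hval; solveP hu hv. Qed.
Lemma P6 x y z a b c : mk3 x y z \in Dset F -> mk3 a b c \in Dset F ->
  a * (z / c) != y -> mk3 (a * (z / c)) y z \in XX (mk3 x y z) (mk3 a b c) (z / c).
Proof. move=> hu hv hval; solveP hu hv. Qed.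

End Perms.

Section Coinc.
Local Open Scope ring_scope.
Variable F : finFieldType.
Implicit Types x y z a b c t mu p q s : F.

Lemma sum2 (u v : vec3 F) mu1 mu2 w1 w2 : u \in Dset F -> v \in Dset F ->
  mu1 != 0 -> mu2 != 0 -> w1 \in XX u v mu1 -> w2 \in XX u v mu2 ->
  (mu1 != mu2) || (w1 != w2) -> (2 <= rho_q u v)%N.
Proof. by move=> hu hv *; rewrite rhoE //; apply: (@sum_ge2 F (XX u v) mu1 mu2 w1 w2). Qed.

Lemma mu_nz x a : x != 0 -> a != 0 -> x / a != 0.
Proof. by move=> hx ha; rewrite mulf_neq0 ?invr_eq0. Qed.

Lemma neq_mk3 x y z x' y' z' : (x != x') || (y != y') || (z != z') -> mk3 x y z != mk3 x' y' z'.
Proof.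
move=> h; apply/negP => /eqP e.
have := congr1 (fun f : vec3 F => f i0) e; have := congr1 (fun f : vec3 F => f i1) e.
have := congr1 (fun f : vec3 F => f i2) e; rewrite !ffunE /= => ez ey ex.
by rewrite ex ey ez !eqxx in h.
Qed.

Ltac destr hu hv :=
  move: (hu) (hv); rewrite !inD3 =>
    /and5P[? ? ? ? /andP[? ?]] /and5P[? ? ? ? /andP[? ?]].

Lemma C01 x y z a b c t : mk3 x y z \in Dset F -> mk3 a b c \in Dset F ->
  x * b = y * a -> t \notin [:: 0; x; y; z] -> (2 <= rho_q (mk3 x y z) (mk3 a b c))%N.
Proof.
move=> hu hv hco; move: (hu) (hv); rewrite !inD3 =>
    /and5P[hx hy hz hxy /andP[hxz hyz]] /and5P[ha hb hc hab /andP[hac hbc]].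
rewrite !inE => /norP[ht0 /norP[htx /norP[hty htz]]].
have e1 : x / a * b = y by rewrite mulrAC hco mulfK.
have e0 : x / a * a = x by rewrite divfK.
apply: (sum2 hu hv (mu_nz hx ha) (mu_nz hx ha) (w1 := mk3 x y z) (w2 := mk3 x y t)).
- by apply: memX => //; [exact: mu_nz | apply: hd01 | rewrite vscale3; exact: hd01].
- apply: memX; [exact: mu_nz | | by apply: hd01 | rewrite vscale3; exact: hd01].
  by rewrite inD3 hx hy ht0 hxy !(eq_sym _ t) htx hty.
- by rewrite eqxx /=; apply: neq_mk3; rewrite eq_sym htz orbT.
Qed.

Lemma C02 x y z a b c t : mk3 x y z \in Dset F -> mk3 a b c \in Dset F ->
  x * c = z * a -> t \notin [:: 0; x; y; z] -> (2 <= rho_q (mk3 x y z) (mk3 a b c))%N.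
Proof.
move=> hu hv hco; move: (hu) (hv); rewrite !inD3 =>
    /and5P[hx hy hz hxy /andP[hxz hyz]] /and5P[ha hb hc hab /andP[hac hbc]].
rewrite !inE => /norP[ht0 /norP[htx /norP[hty htz]]].
have e1 : x / a * c = z by rewrite mulrAC hco mulfK.
have e0 : x / a * a = x by rewrite divfK.
apply: (sum2 hu hv (mu_nz hx ha) (mu_nz hx ha) (w1 := mk3 x y z) (w2 := mk3 x t z)).
- by apply: memX => //; [exact: mu_nz | apply: hd02 | rewrite vscale3; exact: hd02].
- apply: memX; [exact: mu_nz | | by apply: hd02 | rewrite vscale3; exact: hd02].
  by rewrite inD3 hx hz ht0 hxz !(eq_sym _ t) htx htz.
- by rewrite eqxx /=; apply: neq_mk3; rewrite eq_sym hty orbT.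
Qed.

Lemma C12 x y z a b c t : mk3 x y z \in Dset F -> mk3 a b c \in Dset F ->
  y * c = z * b -> t \notin [:: 0; x; y; z] -> (2 <= rho_q (mk3 x y z) (mk3 a b c))%N.
Proof.
move=> hu hv hco; move: (hu) (hv); rewrite !inD3 =>
    /and5P[hx hy hz hxy /andP[hxz hyz]] /and5P[ha hb hc hab /andP[hac hbc]].
rewrite !inE => /norP[ht0 /norP[htx /norP[hty htz]]].
have e1 : y / b * c = z by rewrite mulrAC hco mulfK.
have e0 : y / b * b = y by rewrite divfK.
apply: (sum2 hu hv (mu_nz hy hb) (mu_nz hy hb) (w1 := mk3 x y z) (w2 := mk3 t y z)).
- by apply: memX => //; [exact: mu_nz | apply: hd12 | rewrite vscale3; exact: hd12].
- apply: memX; [exact: mu_nz | | by apply: hd12 | rewrite vscale3; exact: hd12].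
  by rewrite inD3 ht0 hy hz hty htz hyz.
- by rewrite eqxx /=; apply: neq_mk3; rewrite eq_sym htx.
Qed.
End Coinc.


Section Final.
Local Open Scope ring_scope.
Variable F : finFieldType.
Implicit Types x y z a b c t mu p q s : F.

Lemma fc1 p q t s : p != 0 -> q * (t / p) = s -> s * p = t * q.
Proof. by move=> hp e; apply/eqP; rewrite -fconv // e. Qed.
Lemma fc2 p q t s : p != 0 -> s * p = t * q -> q * (t / p) = s.
Proof. by move=> hp e; apply/eqP; rewrite fconv // e. Qed.

Lemma ex_t x y z : (4 < #|F|)%N -> exists t : F, t \notin [:: 0; x; y; z].
Proof.
move=> h4; case: (pickP (fun t : F => t \notin [:: 0; x; y; z])) => [t ht|none].
  by exists t.
exfalso; move: h4; rewrite ltnNge; apply/negP/negPn.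
apply: leq_trans (card_size [:: 0; x; y; z]).
apply: subset_leq_card; apply/subsetP => t _.
by move: (none t) => /negbFE.
Qed.

Lemma low x y z a b c : mk3 x y z \in Dset F -> mk3 a b c \in Dset F ->
  (4 < #|F|)%N -> ~~ (3 %| #|F|.-1)%N -> (2 <= rho_q (mk3 x y z) (mk3 a b c))%N.
Proof.
move=> hu hv h4 h3; move: (hu) (hv); rewrite !inD3 =>
    /and5P[hx hy hz hxy /andP[hxz hyz]] /and5P[ha hb hc hab /andP[hac hbc]].
have [t ht] := ex_t x y z h4.
case: (eqVneq (x * b) (y * a)) => [e|n01]; first exact: (C01 hu hv e ht).
case: (eqVneq (x * c) (z * a)) => [e|n02]; first exact: (C02 hu hv e ht).
case: (eqVneq (y * c) (z * b)) => [e|n12]; first exact: (C12 hu hv e ht).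
have d01 : x / a != y / b by rewrite eqr_div.
have d02 : x / a != z / c by rewrite eqr_div.
have d12 : y / b != z / c by rewrite eqr_div.
have mx := mu_nz hx ha; have my := mu_nz hy hb; have mz := mu_nz hz hc.
case: (eqVneq (c * (x / a)) y) => [f1|v1]; case: (eqVneq (a * (y / b)) z) => [f4|v4];
  case: (eqVneq (b * (z / c)) x) => [f5|v5].
- move: (fc1 ha f1) (fc1 hb f4) (fc1 hc f5) => S1 S4 S5.
  case: (eqVneq (b * (x / a)) z) => [f2|v2]; case: (eqVneq (c * (y / b)) x) => [f3|v3];
    case: (eqVneq (a * (z / c)) y) => [f6|v6].
  + move: (fc1 ha f2) (fc1 hb f3) (fc1 hc f6) => S2 S3 S6.
    by move: h3; rewrite (omega_from hx hy hz _ ha S1 S2 S4 S6) // eq_sym.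
  + move: (fc1 ha f2) (fc1 hb f3) => S2 S3.
    by move: v6; rewrite (fc2 hc (_ : y * c = z * a)) ?eqxx // -S3 S2.
  + move: (fc1 ha f2) (fc1 hc f6) => S2 S6.
    by move: v3; rewrite (fc2 hb (_ : x * b = y * c)) ?eqxx // S6 S2.
  + by apply: (sum2 hu hv my mz (P3 hu hv v3) (P6 hu hv v6)); rewrite d12.
  + move: (fc1 hb f3) (fc1 hc f6) => S3 S6.
    by move: v2; rewrite (fc2 ha (_ : z * a = x * b)) ?eqxx // S3 S6.
  + by apply: (sum2 hu hv mx mz (P2 hu hv v2) (P6 hu hv v6)); rewrite d02.
  + by apply: (sum2 hu hv mx my (P2 hu hv v2) (P3 hu hv v3)); rewrite d01.
  + by apply: (sum2 hu hv mx my (P2 hu hv v2) (P3 hu hv v3)); rewrite d01.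
- move: (fc1 ha f1) (fc1 hb f4) => S1 S4.
  by move: v5; rewrite (fc2 hc (_ : x * c = z * b)) ?eqxx // S4 S1.
- move: (fc1 ha f1) (fc1 hc f5) => S1 S5.
  by move: v4; rewrite (fc2 hb (_ : z * b = y * a)) ?eqxx // S1 S5.
- by apply: (sum2 hu hv my mz (P4 hu hv v4) (P5 hu hv v5)); rewrite d12.
- move: (fc1 hb f4) (fc1 hc f5) => S4 S5.
  by move: v1; rewrite (fc2 ha (_ : y * a = x * c)) ?eqxx // S5 S4.
- by apply: (sum2 hu hv mx mz (P1 hu hv v1) (P5 hu hv v5)); rewrite d02.
- by apply: (sum2 hu hv mx my (P1 hu hv v1) (P4 hu hv v4)); rewrite d01.
- by apply: (sum2 hu hv mx my (P1 hu hv v1) (P4 hu hv v4)); rewrite d01.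
Qed.
End Final.


Section Up.
Local Open Scope ring_scope.
Variable F : finFieldType.
Implicit Types x y z a b c t mu p q s : F.

Lemma sum_ind (m : F) : (\sum_(mu : F) (mu == m) = 1)%N.
Proof. by rewrite (bigD1 m) //= eqxx big1 // => i /negbTE ->. Qed.

Lemma upper2 (u v : vec3 F) m1 m2 w1 w2 : u \in Dset F -> v \in Dset F -> m1 != m2 ->
  (forall mu w, mu != 0 -> w \in XX u v mu -> (mu = m1 /\ w = w1) \/ (mu = m2 /\ w = w2)) ->
  (rho_q u v <= 2)%N.
Proof.
move=> hu hv hm K; rewrite rhoE //.
apply: (@leq_trans (\sum_(mu : F | mu != 0%R) ((mu == m1) + (mu == m2)))%N).
  apply: leq_sum => mu mu0.
  case: (eqVneq mu m1) => [e1|n1].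
    subst mu; rewrite (negbTE hm) /= addn0.
    apply: leq_trans (subset_leq_card (_ : XX u v m1 \subset [set w1])) _; last by rewrite cards1.
    apply/subsetP => w hw; rewrite inE; case: (K _ _ mu0 hw) => [[_ ->]|[e _]] //.
    by rewrite e eqxx in hm.
  case: (eqVneq mu m2) => [e2|n2].
    subst mu; rewrite /= add0n.
    apply: leq_trans (subset_leq_card (_ : XX u v m2 \subset [set w2])) _; last by rewrite cards1.
    apply/subsetP => w hw; rewrite inE; case: (K _ _ mu0 hw) => [[e _]|[_ ->]] //.
    by rewrite e eqxx in n1.
  rewrite /= leqn0 cards_eq0; apply/eqP/setP => w; rewrite [w \in set0]inE.
  apply/negbTE/negP => hw; case: (K _ _ mu0 hw) => -[e _].
    by rewrite e eqxx in n1.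
  by rewrite e eqxx in n2.
apply: (@leq_trans (\sum_(mu : F) ((mu == m1) + (mu == m2)))%N).
  by rewrite [X in (_ <= X)%N](bigID (fun mu => mu != 0)) /= leq_addr.
by rewrite big_split /= !sum_ind.
Qed.
End Up.

Section Kex.
Local Open Scope ring_scope.
Variable F : finFieldType.

Lemma Kex (g : F) : g != 0 -> g != 1 -> g ^+ 2 != 1 ->
  forall mu w, mu != 0 -> w \in XX (mk3 1 (g ^+ 2) g) (mk3 1 g (g ^+ 2)) mu ->
  (mu = g /\ w = mk3 1 (g ^+ 2) (g * g ^+ 2)) \/ (mu = g^-1 /\ w = mk3 g^-1 (g ^+ 2) g).
Proof.
move=> g0 g1 g2 m w _.
have gg2 : g != g ^+ 2.
  by apply: contraNneq g1 => e; apply/eqP; apply: (mulIf g0); rewrite mul1r -expr2 -e.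
have f1 x : x * g = g ^+ 2 -> x = g by move=> e; apply: (mulIf g0); rewrite e expr2.
have f2 x : x * g ^+ 2 = g -> x = g^-1.
  move=> e; apply: (mulIf g0); rewrite mulVf //; apply: (mulIf g0).
  by rewrite mul1r -mulrA -expr2 e.
rewrite /XX (mk3E w) vscale3 in_setI !inBt inD3 !mulr1.
move: (w i0) (w i1) (w i2) => p0 p1 p2 /andP[/andP[hA]] hD /andP[hB _].
move: hD => /and5P[_ _ _ /eqP n01 /andP[/eqP n02 /eqP n12]].
case/hd3_inv: hA => -[A1 A2]; case/hd3_inv: hB => -[B1 B2]; subst.
- by move: B2; rewrite mul1r => /eqP; rewrite (negbTE gg2).
- by exfalso; apply: n12; rewrite mul1r.
- by left; have e := f1 _ B1; subst m.
- by exfalso; apply: n12; rewrite mul1r.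
- by move: B2; rewrite mul1r => /eqP; rewrite eq_sym (negbTE gg2).
- by exfalso; apply: n01; rewrite (f2 _ B2) mulVf.
- by exfalso; apply: n02; exact: f1 _ B2.
- by right; move: B2 => /f2 e; subst.
- exfalso; move: B2; rewrite (f1 _ B1) -[RHS]mulr1 => /(mulfI g0) e.
  by rewrite e eqxx in g2.
Qed.
End Kex.


Section Fin.
Local Open Scope ring_scope.
Variable F : finFieldType.

Lemma D_ex (w : F) : w != 0 -> w != 1 -> w ^+ 2 != 1 ->
  mk3 1 (w ^+ 2) w \in Dset F /\ mk3 1 w (w ^+ 2) \in Dset F.
Proof.
move=> w0 w1 w2.
have ww2 : w != w ^+ 2.
  by apply: contraNneq w1 => e; apply/eqP; apply: (mulIf w0); rewrite mul1r -expr2 -e.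
rewrite !inD3 oner_eq0 expf_neq0 // w0 !(eq_sym 1) w1 w2 ww2 /=.
by rewrite eq_sym ww2.
Qed.

Lemma omega_facts (w : F) : w ^+ 3 = 1 -> w != 1 -> w != 0 /\ w ^+ 2 != 1.
Proof.
move=> w3 w1.
have w0 : w != 0 by apply/eqP => e; move: w3; rewrite e expr0n => /eqP; rewrite eq_sym oner_eq0.
split => //; apply: contraNneq w1 => e; apply/eqP; rewrite -w3 exprS e mulr1.
by [].
Qed.
End Fin.

Unset Implicit Arguments.
Theorem theorem17 (F : finFieldType) (hq : (4 <= #|F|)%N) :
  let r := if (3 %| #|F|.-1)%N then 0%N else 2%N in
  (exists u, exists v, u \in Dset F /\ v \in Dset F /\ rho_q u v = r) /\
  (forall u v, u \in Dset F -> v \in Dset F -> (r <= rho_q u v)%N).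
Proof.
move=> r; rewrite /r; case: ifP => h3.
  split; last by [].
  have [w [w3 w1]] := omega_ex h3.
  have [w0 w2] := omega_facts w3 w1.
  have [hu hv] := D_ex w0 w1 w2.
  exists (mk3 1%R (w ^+ 2)%R w), (mk3 1%R w (w ^+ 2)%R); split => //; split => //.
  by rewrite rhoE // example.
have h4 : (4 < #|F|)%N.
  rewrite ltn_neqAle hq andbT; apply/negP => /eqP e.
  by move: h3; rewrite -e.
split.
  have [g hg] := ex_t 1%R (-1)%R 0%R h4.
  move: hg; rewrite !inE => /norP[g0 /norP[g1 /norP[gm1 _]]].
  have g2 : (g ^+ 2 != 1)%R by rewrite sqrf_eq1 negb_or g1.
  have [hu hv] := D_ex g0 g1 g2.
  exists (mk3 1%R (g ^+ 2)%R g), (mk3 1%R g (g ^+ 2)%R); split => //; split => //.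
  apply/eqP; rewrite eqn_leq low ?h3 // andbT.
  apply: (upper2 (m1 := g) (m2 := (g^-1)%R) hu hv _ (Kex g0 g1 g2)).
  apply: contra g2 => /eqP e; apply/eqP.
  by rewrite expr2 {2}e mulfV.
move=> u v hu hv; rewrite (mk3E u) (mk3E v) in hu hv *.
by apply: low => //; rewrite h3.
Qed.
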